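(* There exists a sequence $(x_n)$ of positive reals with $\sum x_n<\infty$ such that the achievement set $E(x_n)$ is a Cantor set of Hausdorff dimension $0$ and the algebraic sum $E(x_n)+E(x_n)$ is also a Cantor set.
   Context: For a real sequence $(x_n)$, the achievement set is $E(x_n)=\{y\in\mathbb R:\exists A\subset\mathbb N,\ y=\sum_{n\in A}x_n\}$. A Cantor set is a set homeomorphic to the classical ternary Cantor set. For sets $A,B\subset\mathbb R$, $A+B=\{a+b:a\in A,b\in B\}$. *)

(* Defs.v *)
From HB Require Import structures.
From mathcomp Require Import all_boot all_order all_algebra.
From mathcomp Require Import all_classical all_reals all_analysis.
From mathcomp Require Import Rstruct Rstruct_topology.
Set Implicit Arguments. Unset Strict Implicit. Unset Printing Implicit Defensive.
Import Order.TTheory GRing.Theory Num.Theory.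
Import numFieldNormedType.Exports.
Local Open Scope classical_set_scope.
Local Open Scope ring_scope.

Section Defs.
Variable R : realType.

Definition achievement_set (x : nat -> R) : set R :=
  [set y | exists A : set nat,
     (series (fun n => if `[< A n >] then x n else 0)) @ \oo --> y].

Definition set_add (A B : set R) : set R :=
  [set z | exists a b, A a /\ B b /\ z = a + b].

Definition ternary_cantor : set R :=
  [set y | exists d : nat -> bool,
     (series (fun n => (2 * (d n)%:R) / 3 ^+ n.+1)) @ \oo --> y].

Definition homeomorphic (A B : set R) : Prop :=
  exists (f g : R -> R),
    (forall a, A a -> B (f a)) /\ (forall b, B b -> A (g b)) /\
    (forall a, A a -> g (f a) = a) /\ (forall b, B b -> f (g b) = b) /\
    {within A, continuous f} /\ {within B, continuous g}.

Definition is_cantor_set (A : set R) : Prop := homeomorphic A ternary_cantor.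

Local Open Scope ereal_scope.

(* diameter of a subset of R, with diam(empty) = 0 *)
Definition diam (U : set R) : \bar R :=
  maxe 0 (ereal_sup [set `|a - b|%:E | a in U & b in U]).

Definition hausdorff_content (s delta : R) (E : set R) : \bar R :=
  ereal_inf [set \sum_(0 <= i <oo) ((fine (diam (U i))) `^ s)%:E |
             U in [set U : nat -> set R |
                     E `<=` \bigcup_i U i /\ forall i, diam (U i) <= delta%:E]].

Definition hausdorff_measure (s : R) (E : set R) : \bar R :=
  ereal_sup [set hausdorff_content s delta E | delta in [set d : R | (0 < d)%R]].

Definition hausdorff_dim (E : set R) : \bar R :=
  ereal_inf [set s%:E | s in [set s : R | (0 <= s)%R /\ hausdorff_measure s E = 0]].

End Defs.

(* Main.v *)
Require Import Defs.
From HB Require Import structures.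
From mathcomp Require Import all_boot all_order all_algebra.
From mathcomp Require Import all_classical all_reals all_analysis.
From mathcomp Require Import Rstruct Rstruct_topology.
From mathcomp Require Import ring lra zify.
Import Order.TTheory GRing.Theory Num.Theory.
Import numFieldNormedType.Exports.
Local Open Scope classical_set_scope.
Local Open Scope ring_scope.
Set Implicit Arguments. Unset Strict Implicit. Unset Printing Implicit Defensive.
Section Coding.
Set Default Proof Using "All".
Variable R : realType.
Variables (w : nat -> R) (r : R) (K : nat).
Hypothesis w0 : forall n, 0 < w n.
Hypothesis wr : forall n, w n.+1 <= r * w n.
Hypothesis r0 : 0 <= r.
Hypothesis r1 : r < 1.

Lemma tail_le N M : (N <= M)%N -> \sum_(N <= k < M) w k <= (w N - w M) / (1 - r).
Proof.
have r1' : 0 < 1 - r by move: r1; lra.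
elim: M => [|M IH].
  by rewrite leqn0 => /eqP ->; rewrite big_geq // subrr mul0r.
rewrite leq_eqVlt => /orP [/eqP ->| NM]; first by rewrite big_geq // subrr mul0r.
rewrite big_nat_recr //= (ler_pdivlMr _ _ r1') mulrDl.
have := IH NM; rewrite (ler_pdivlMr _ _ r1') => h.
have := wr M; move: h; set S := \sum_(_ <= _ < _) _; rewrite mulrBr mulr1 (mulrC (w M)); lra.
Qed.

Lemma w_le N M : (N <= M)%N -> w M <= w N.
Proof.
elim: M => [|M IH]; first by rewrite leqn0 => /eqP ->.
rewrite leq_eqVlt => /orP [/eqP ->| NM] //.
have := IH NM; have := wr M; have := w0 M; move: r1; nra.
Qed.

Lemma sum_bound (d : nat -> R) N M : (forall k, `|d k| <= K%:R) -> (N <= M)%N ->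
  `|\sum_(N <= k < M) d k * w k| <= K%:R * w N / (1 - r).
Proof.
move=> dK NM.
have r1' : 0 < 1 - r by move: r1; lra.
apply: (le_trans (ler_norm_sum _ _ _)).
apply: (@le_trans _ _ (\sum_(N <= k < M) K%:R * w k)).
  apply: ler_sum => k _; rewrite normrM (gtr0_norm (w0 k)).
  by apply: ler_wpM2r; [exact: ltW|].
rewrite -mulr_sumr -mulrA; apply: ler_wpM2l => //.
apply: (le_trans (tail_le NM)); apply: ler_pM => //.
- by rewrite subr_ge0 w_le.
- by rewrite invr_ge0 ltW.
- by have := w0 M; lra.
Qed.

Definition codeV (c : nat -> R) := limn (series (fun n => c n * w n)).

Lemma cvg_code c : (forall k, 0 <= c k <= K%:R) -> cvgn (series (fun n => c n * w n)).
Proof.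
move=> cK; apply: nondecreasing_is_cvgn.
  apply/nondecreasing_seqP => n; rewrite seriesSr lerDl.
  by have := cK n; have := w0 n; nra.
exists (K%:R * w 0 / (1 - r)) => _ [n _ <-].
have := @sum_bound c 0 n; rewrite /series /=.
move=> h; apply: le_trans (h _ (leq0n _)); first exact: ler_norm.
by move=> k; have /andP[h1 h2] := cK k; rewrite ger0_norm.
Qed.


Lemma series_diff (c c' : nat -> R) n :
  series (fun k => c k * w k) n - series (fun k => c' k * w k) n =
  \sum_(0 <= k < n) (c k - c' k) * w k.
Proof. by rewrite /series /= -sumrB; apply: eq_bigr => k _; rewrite mulrBl. Qed.

Lemma code_diff c c' N : (forall k, 0 <= c k <= K%:R) -> (forall k, 0 <= c' k <= K%:R) ->
  (forall k, (k < N)%N -> c k = c' k) ->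
  `|codeV c - codeV c'| <= K%:R * w N / (1 - r).
Proof.
move=> cK c'K ceq.
have hc := cvg_code cK; have hc' := cvg_code c'K.
have h := cvg_norm (cvgB hc hc').
apply: (cvgr_to_le (h eventually_filter eventually_filter)); exists N => // n /= Nn.
change (`|series (fun k => c k * w k) n - series (fun k => c' k * w k) n| <= K%:R * w N / (1 - r)).
rewrite series_diff (big_cat_nat (leq0n N) Nn) /= big1_seq ?add0r.
  apply: sum_bound => // k.
  have /andP[h1 h2] := cK k; have /andP[h3 h4] := c'K k.
  by rewrite ler_norml; apply/andP; split; lra.
by move=> k; rewrite mem_index_iota => /andP[_ kN]; rewrite ceq // subrr mul0r.
Qed.

Lemma code_gap c c' m : (forall k, 0 <= c k <= K%:R) -> (forall k, 0 <= c' k <= K%:R) ->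
  (forall k, (k < m)%N -> c k = c' k) -> 1 <= c m - c' m ->
  w m - K%:R * w m.+1 / (1 - r) <= codeV c - codeV c'.
Proof.
move=> cK c'K ceq cm.
have hc := cvg_code cK; have hc' := cvg_code c'K.
have h := cvgB hc hc'.
apply: (cvgr_to_ge (h eventually_filter)); exists m.+1 => // n /= Nn.
change (w m - K%:R * w m.+1 / (1 - r) <= series (fun k => c k * w k) n - series (fun k => c' k * w k) n).
rewrite series_diff (big_cat_nat (leq0n m.+1) Nn) /= big_nat_recr //= big1_seq ?add0r; last first.
  by move=> k; rewrite mem_index_iota => /andP[_ kN]; rewrite ceq // subrr mul0r.
have hs := @sum_bound (fun k => c k - c' k) m.+1 n.
have : `|\sum_(m.+1 <= k < n) (c k - c' k) * w k| <= K%:R * w m.+1 / (1 - r).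
  apply: hs => // k.
  have /andP[h1 h2] := cK k; have /andP[h3 h4] := c'K k.
  by rewrite ler_norml; apply/andP; split; lra.
rewrite ler_norml => /andP[h1 _].
have := w0 m; move: cm h1.
set S := \sum_(_ <= _ < _) _; set B := _ / _; set D := c m - c' m.
nra.
Qed.

Lemma gap_pos m : K%:R * r < 1 - r -> 0 < w m - K%:R * w m.+1 / (1 - r).
Proof.
move=> Kr; have r1' : 0 < 1 - r by move: r1; lra.
rewrite subr_gt0 ltr_pdivrMr // .
have := wr m; have := w0 m; have := w0 m.+1; move: Kr r0.
have : 0 <= K%:R :> R by [].
nra.
Qed.


Lemma w_geom N : w N <= r ^+ N * w 0.
Proof.
elim: N => [|N IH]; first by rewrite expr0 mul1r.
apply: (le_trans (wr N)); rewrite exprS -mulrA; exact: ler_wpM2l.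
Qed.

Lemma w_small e : 0 < e -> exists N, K%:R * w N / (1 - r) < e.
Proof.
move=> e0; have r1' : 0 < 1 - r by move: r1; lra.
have rabs : `|r| < 1 by rewrite ger0_norm.
have A0 : 0 <= K%:R :> R by [].
have W0 := w0 0.
pose e' := e * (1 - r) / ((K%:R + 1) * w 0).
have e'0 : 0 < e' by rewrite /e'; apply: divr_gt0; [exact: mulr_gt0|apply: mulr_gt0 => //; lra].
have := cvg_expr rabs => /(cvgr0Pnorm_lt _).
move=> /(_ _ e'0) [N _ hN]; exists N.
have := hN N (leqnn N) => /=; rewrite ger0_norm ?exprn_ge0 // => hrN.
have hw := w_geom N.
rewrite ltr_pdivrMr //.
have : r ^+ N * ((K%:R + 1) * w 0) < e * (1 - r).
  by move: hrN; rewrite /e' ltr_pdivlMr //; apply: mulr_gt0 => //; lra.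
have : 0 <= r ^+ N by rewrite exprn_ge0.
move: hw; set q := r ^+ N; set s := 1 - r => hw hq hlt.
have : K%:R * w N <= K%:R * (q * w 0) by apply: ler_wpM2l.
have : 0 < e * s by apply: mulr_gt0.
nra.
Qed.

End Coding.

Lemma nbhs_prefix (D : discreteTopologicalType) (x : prod_topology (fun _ : nat => D)) N :
  nbhs x [set y : prod_topology (fun _ : nat => D) | forall k, (k < N)%N -> y k = x k].
Proof.
elim: N => [|N IH].
  by apply: filterS filterT => y _ k.
have h1 : nbhs x [set y : prod_topology (fun _ : nat => D) | y N = x N].
  have := @proj_continuous nat (fun _ => D) N x [set x N] (discrete_set1 _).
  by move=> h; have := @filterS _ (nbhs x) _ _ _ _ h; apply => y.
apply: filterS (filterI IH h1) => y [hy hN] k; rewrite ltnS leq_eqVlt => /orP[/eqP ->|] //.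
exact: hy.
Qed.

Lemma code_cont (R : realType) (w : nat -> R) (r : R) (K : nat) (D : discreteTopologicalType)
  (phi : D -> R) :
  (forall n, 0 < w n) -> (forall n, w n.+1 <= r * w n) -> 0 <= r -> r < 1 ->
  (forall a, 0 <= phi a <= K%:R) ->
  continuous (fun x : prod_topology (fun _ : nat => D) => codeV w (fun n => phi (x n))).
Proof.
move=> w0 wr r0 r1 phiK x; apply/(@cvgrPdist_lt _ _ _ _ (nbhs_filter x)) => e e0.
have [N hN] := w_small K w0 wr r0 r1 e0.
apply: filterS (nbhs_prefix x N) => y hy.
apply: le_lt_trans hN.
apply: (code_diff w0 wr r0 r1) => // k kN.
by rewrite hy.
Qed.


Lemma code_lt (R : realType) (w : nat -> R) (r : R) (K : nat) (c c' : nat -> R) m :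
  (forall n, 0 < w n) -> (forall n, w n.+1 <= r * w n) -> 0 <= r -> r < 1 ->
  K%:R * r < 1 - r ->
  (forall k, 0 <= c k <= K%:R) -> (forall k, 0 <= c' k <= K%:R) ->
  (forall k, (k < m)%N -> c k = c' k) -> 1 <= c m - c' m ->
  codeV w c' < codeV w c.
Proof.
move=> w0 wr r0 r1 Kr cK c'K ceq cm.
have := code_gap w0 wr r0 r1 cK c'K ceq cm.
have := gap_pos w0 wr r0 r1 m Kr.
lra.
Qed.

Lemma code_inj (R : realType) (w : nat -> R) (r : R) (K : nat) (D : Type) (phi : D -> nat) :
  (forall n, 0 < w n) -> (forall n, w n.+1 <= r * w n) -> 0 <= r -> r < 1 ->
  K%:R * r < 1 - r -> (forall a, (phi a <= K)%N) ->
  forall x y : nat -> D,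
  codeV w (fun n => (phi (x n))%:R) = codeV w (fun n => (phi (y n))%:R) ->
  forall n, phi (x n) = phi (y n).
Proof.
move=> w0 wr r0 r1 Kr phiK x y heq n.
apply/eqP/negPn/negP => hn.
have hex : exists n, phi (x n) != phi (y n) by exists n.
case: (ex_minnP hex) => m hm hmin.
have agree : forall k, (k < m)%N -> phi (x k) = phi (y k).
  move=> k km; apply/eqP/negPn/negP => hk.
  by have := hmin k hk; rewrite leqNgt km.
have dig : forall z : nat -> D, forall k, 0 <= ((phi (z k))%:R : R) <= K%:R.
  by move=> z k; rewrite ler0n /= ler_nat.
case: (ltngtP (phi (x m)) (phi (y m))) => hlt; last by rewrite hlt eqxx in hm.
- suff : codeV w (fun n => (phi (x n))%:R) < codeV w (fun n => (phi (y n))%:R).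
    by rewrite heq ltxx.
  apply: (code_lt w0 wr r0 r1 Kr (dig y) (dig x) (m := m)).
    by move=> k km; rewrite agree.
  by rewrite lerBrDr addrC natr1 ler_nat.
- suff : codeV w (fun n => (phi (y n))%:R) < codeV w (fun n => (phi (x n))%:R).
    by rewrite heq ltxx.
  apply: (code_lt w0 wr r0 r1 Kr (dig x) (dig y) (m := m)).
    by move=> k km; rewrite agree.
  by rewrite lerBrDr addrC natr1 ler_nat.
Qed.
Lemma inv_cont (R : realType) (h : cantor_space -> R) : continuous h -> injective h ->
  forall x (U : set cantor_space), nbhs x U ->
  exists2 e, 0 < e & forall y, `|h x - h y| < e -> U y.
Proof.
move=> hc hi x U; rewrite nbhsE => -[V [oV Vx] VU].
have cC : closed (~` V) by exact: open_closedC.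
have kC : compact (~` V).
  by apply: (subclosed_compact cC cantor_space_compact).
have kI : compact (h @` (~` V)).
  by apply: continuous_compact => //; apply: continuous_subspaceT.
have clI : closed (h @` (~` V)) by apply: compact_closed => //; exact: Rhausdorff.
have oI : open (~` (h @` (~` V))) by exact: closed_openC.
have hxI : (~` (h @` (~` V))) (h x).
  by move=> [y Vy /hi yx]; apply: Vy; rewrite yx.
have := open_nbhs_nbhs (conj oI hxI) => /nbhs_ballP [e e0 he].
exists e => // y hy; apply: VU; apply: contrapT => Vy.
apply: (he (h y)); last by exists y.
by rewrite -ball_normE /ball_ /=.
Qed.

Definition inv_of (R : realType) (h : cantor_space -> R) (a : R) : cantor_space :=
  if pselect (exists x, h x = a) is left e then projT1 (cid e) else point.

Lemma inv_ofK (R : realType) (h : cantor_space -> R) : injective h ->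
  forall x, inv_of h (h x) = x.
Proof.
move=> hi x; rewrite /inv_of; case: pselect => [e|]; last by move=> /(_ (ex_intro _ x erefl)).
by apply: hi; case: (cid e).
Qed.

Lemma within_cont_comp (R : realType) (h1 h2 : cantor_space -> R) :
  continuous h1 -> continuous h2 -> injective h1 ->
  {within range h1, continuous (fun a => h2 (inv_of h1 a))}.
Proof.
move=> c1 c2 i1; apply/subspace_continuousP => _ [x _ <-].
rewrite /from_subspace inv_ofK //.
move=> W hW.
have hU := c2 x W hW.
have [e e0 he] := inv_cont c1 i1 hU.
rewrite /within /=; apply/nbhs_ballP; exists e => // b hb [y _ yb].
move: hb; rewrite -yb -ball_normE /ball_ /= => hb.
rewrite inv_ofK //; exact: he.
Qed.

Lemma range_homeo (R : realType) (h1 h2 : cantor_space -> R) :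
  continuous h1 -> continuous h2 -> injective h1 -> injective h2 ->
  homeomorphic (range h1) (range h2).
Proof.
move=> c1 c2 i1 i2.
exists (fun a => h2 (inv_of h1 a)), (fun b => h1 (inv_of h2 b)).
split; first by move=> a _; exists (inv_of h1 a).
split; first by move=> a _; exists (inv_of h2 a).
split; first by move=> _ [x _ <-]; rewrite !inv_ofK.
split; first by move=> _ [x _ <-]; rewrite !inv_ofK.
split; exact: within_cont_comp.
Qed.

Lemma codeV_add (R : realType) (w : nat -> R) (r : R) (K1 K2 : nat) (c1 c2 : nat -> R) :
  (forall n, 0 < w n) -> (forall n, w n.+1 <= r * w n) -> 0 <= r -> r < 1 ->
  (forall k, 0 <= c1 k <= K1%:R) -> (forall k, 0 <= c2 k <= K2%:R) ->
  codeV w (fun n => c1 n + c2 n) = codeV w c1 + codeV w c2.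
Proof.
move=> w0 wr r0 r1 h1 h2.
have cv1 := cvg_code w0 wr r0 r1 h1; have cv2 := cvg_code w0 wr r0 r1 h2.
rewrite /codeV.
have -> : (series (fun n => (c1 n + c2 n) * w n)) =
    series (fun n => c1 n * w n) + series (fun n => c2 n * w n).
  apply: funext => n; change (series (fun n => (c1 n + c2 n) * w n) n = series (fun n => c1 n * w n) n + series (fun n => c2 n * w n) n).
  rewrite /series /= -big_split /=.
  by apply: eq_bigr => k _; rewrite mulrDl.
exact: limD.
Qed.

Lemma codeV_lim (R : realType) (w : nat -> R) (r : R) (K : nat) (c : nat -> R) :
  (forall n, 0 < w n) -> (forall n, w n.+1 <= r * w n) -> 0 <= r -> r < 1 ->
  (forall k, 0 <= c k <= K%:R) ->
  series (fun n => c n * w n) @ \oo --> codeV w c.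
Proof. move=> w0 wr r0 r1 h; exact: (cvg_code w0 wr r0 r1 h). Qed.

Local Notation RR := Rdefinitions.R.

Definition xs (n : nat) : RR := (4^-1) ^+ (n * n).+1.
Definition wC (n : nat) : RR := 2 / 3 ^+ n.+1.

Lemma xs_gt0 n : 0 < xs n.
Proof. by rewrite /xs exprn_gt0 // invr_gt0. Qed.

Lemma xs_rat n : xs n.+1 <= 4^-1 * xs n.
Proof.
rewrite /xs.
have -> : ((n.+1 * n.+1).+1 = (n * n).+1 + n.*2.+1)%N.
  by rewrite -addnn; lia.
rewrite exprD mulrC; apply: ler_wpM2r; first by rewrite exprn_ge0 // invr_ge0.
rewrite exprS -[X in _ <= X]mulr1; apply: ler_wpM2l; first by rewrite invr_ge0.
apply: exprn_ile1; first by rewrite invr_ge0.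
by rewrite invf_le1 //; lra.
Qed.

Lemma wC_gt0 n : 0 < wC n.
Proof. by rewrite /wC divr_gt0 // exprn_gt0. Qed.

Lemma wC_rat n : wC n.+1 <= 3^-1 * wC n.
Proof.
by rewrite /wC exprS invfM mulrCA.
Qed.

Definition hC (d : cantor_space) : RR := codeV wC (fun n => (d n : nat)%:R).
Definition hE (d : cantor_space) : RR := codeV xs (fun n => (d n : nat)%:R).

Lemma bool_dig (b : bool) : 0 <= ((b : nat)%:R : RR) <= 1%:R.
Proof. by case: b => /=; rewrite ?ler01 ?lexx. Qed.

Lemma hC_cont : continuous hC.
Proof.
have := (@code_cont RR wC (3^-1) 1 bool (fun b : bool => (b : nat)%:R) wC_gt0 wC_rat).
apply; [by rewrite invr_ge0 | by rewrite invf_lt1 //; lra | exact: bool_dig].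
Qed.

Lemma q3 : (0 : RR) <= 3^-1 /\ (3^-1 : RR) < 1.
Proof. by split; [rewrite invr_ge0 | rewrite invf_lt1 //; lra]. Qed.
Lemma q4 : (0 : RR) <= 4^-1 /\ (4^-1 : RR) < 1.
Proof. by split; [rewrite invr_ge0 | rewrite invf_lt1 //; lra]. Qed.

Lemma hE_cont : continuous hE.
Proof.
have := (@code_cont RR xs (4^-1) 1 bool (fun b : bool => (b : nat)%:R) xs_gt0 xs_rat).
by apply; [exact: q4.1 | exact: q4.2 | exact: bool_dig].
Qed.

Lemma hC_inj : injective hC.
Proof.
move=> x y heq.
have h : forall n, (x n : nat) = y n.
  apply: (@code_inj RR wC (3^-1) 1 bool (fun b : bool => (b : nat)) wC_gt0 wC_rat q3.1 q3.2) => //.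
    by rewrite mul1r; lra.
  by case.
by apply: funext => n; have := h n; case: (x n); case: (y n).
Qed.

Lemma hE_inj : injective hE.
Proof.
move=> x y heq.
have h : forall n, (x n : nat) = y n.
  apply: (@code_inj RR xs (4^-1) 1 bool (fun b : bool => (b : nat)) xs_gt0 xs_rat q4.1 q4.2) => //.
    by rewrite mul1r; lra.
  by case.
by apply: funext => n; have := h n; case: (x n); case: (y n).
Qed.

Lemma range_hC : @ternary_cantor RR = range hC.
Proof.
have eqf : forall d : nat -> bool, (fun n => (2 * (d n)%:R) / 3 ^+ n.+1 : RR) =
    (fun n => (d n : nat)%:R * wC n).
  by move=> d; apply: funext => n; rewrite /wC mulrA [_ * 2]mulrC.
have cv : forall d : cantor_space, series (fun n => (d n : nat)%:R * wC n) @ \oo --> hC d.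
  move=> d; apply: (@codeV_lim RR wC (3^-1) 1 _ wC_gt0 wC_rat q3.1 q3.2) => k.
  exact: bool_dig.
apply/seteqP; split => y.
  rewrite /ternary_cantor /=; move=> [d hd]; exists d; first by []; rewrite eqf in hd.
  rewrite /hC /codeV; exact: (cvg_lim (@Rhausdorff _) hd).
move=> [d _ <-]; rewrite /ternary_cantor /=; exists d; rewrite eqf; exact: cv.
Qed.

Lemma cvE (d : cantor_space) : series (fun n => (d n : nat)%:R * xs n) @ \oo --> hE d.
Proof.
apply: (@codeV_lim RR xs (4^-1) 1 _ xs_gt0 xs_rat q4.1 q4.2) => k.
exact: bool_dig.
Qed.

Lemma range_hE : achievement_set xs = range hE.
Proof.
have eqA : forall d : nat -> bool, (fun n => if d n then xs n else 0) =
    (fun n => (d n : nat)%:R * xs n).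
  by move=> d; apply: funext => n; case: (d n); rewrite ?mul1r ?mul0r.
apply/seteqP; split => y.
  rewrite /achievement_set /=; move=> [A hA].
  exists (fun n => `[< A n >]); first by [].
  rewrite eqA in hA; rewrite /hE /codeV; exact: (cvg_lim (@Rhausdorff _) hA).
move=> [d _ <-]; rewrite /achievement_set /=; exists (fun n => d n).
have -> : (fun n => if `[< d n >] then xs n else 0) = (fun n => if d n then xs n else 0).
  by apply: funext => n; rewrite asboolb.
rewrite eqA; exact: cvE.
Qed.

Definition K3' : Type := 'I_3.
HB.instance Definition _ := Choice.on K3'.
HB.instance Definition _ := isPointed.Build K3' ord0.
Definition K3 : Type := discrete_topology K3'.
HB.instance Definition _ := DiscreteTopology.on K3.
HB.instance Definition _ := Pointed.on K3.
Definition tree3 := @tree_of (fun _ : nat => K3).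

Lemma tree3_cantor : cantor_like tree3.
Proof.
apply: (@cantor_like_finite_prod (fun _ => K3)) => n.
  apply: finite_finset.
by exists (ord0, ord_max).
Qed.

Lemma tree3_hom : exists f : {splitbij [set: cantor_space] >-> [set: tree3]},
    continuous f /\ (forall A, closed A -> closed (f @` A)).
Proof. exact: (@homeomorphism_cantor_like RR tree3 tree3_cantor). Qed.

Definition kE (c : tree3) : RR := codeV xs (fun n => (nat_of_ord (c n : 'I_3))%:R).

Lemma ord3_dig (a : 'I_3) : 0 <= ((a : nat)%:R : RR) <= 2%:R.
Proof. by rewrite ler0n /= ler_nat -ltnS. Qed.

Lemma kE_cont : continuous kE.
Proof.
have := (@code_cont RR xs (4^-1) 2 (discrete_topology K3) (fun a : K3 => (nat_of_ord (a : 'I_3))%:R) xs_gt0 xs_rat).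
by apply; [exact: q4.1 | exact: q4.2 | move=> a; exact: ord3_dig].
Qed.

Lemma kE_inj : injective kE.
Proof.
move=> x y heq.
have h : forall n, nat_of_ord (x n : 'I_3) = y n.
  apply: (@code_inj RR xs (4^-1) 2 K3 (fun a : K3 => nat_of_ord (a : 'I_3)) xs_gt0 xs_rat q4.1 q4.2) => //.
    by lra.
  by move=> a; rewrite -ltnS.
by apply: funext => n; apply: val_inj; exact: h.
Qed.

Lemma hE_add (d e : cantor_space) :
  hE d + hE e = codeV xs (fun n => (d n : nat)%:R + (e n : nat)%:R).
Proof.
rewrite /hE (@codeV_add RR xs (4^-1) 1 1 _ _ xs_gt0 xs_rat q4.1 q4.2) //;
  move=> k; exact: bool_dig.
Qed.

Lemma range_add : set_add (achievement_set xs) (achievement_set xs) = range kE.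
Proof.
rewrite range_hE; apply/seteqP; split => z.
  rewrite /set_add /=; move=> [a [b [[d _ <-] [[e _ <-] ->]]]].
  have hlt : forall n, ((d n : nat) + (e n : nat) < 3)%N.
    by move=> n; case: (d n); case: (e n).
  exists (fun n => (Ordinal (hlt n) : K3)); first by [].
  rewrite hE_add /kE /=; congr codeV; apply: funext => n /=.
  by rewrite natrD.
move=> [c _ <-].
pose d : cantor_space := fun n => (1 <= (c n : 'I_3))%N.
pose e : cantor_space := fun n => ((c n : 'I_3) == 2 :> nat).
exists (hE d), (hE e); split; first by exists d.
split; first by exists e.
rewrite hE_add /kE; congr codeV; apply: funext => n /=.
rewrite /d /e -natrD; congr (_%:R).
by case: (c n) => -[|[|[|m]]].
Qed.

Lemma range_kEf (f : {splitbij [set: cantor_space] >-> [set: tree3]}) :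
  range kE = range (fun d => kE (f d)).
Proof.
apply/seteqP; split => z; last by move=> [d _ <-]; exists (f d).
move=> [c _ <-]; exists (f^-1%FUN c); first by [].
by rewrite invK // inE.
Qed.

Lemma f_inj (f : {splitbij [set: cantor_space] >-> [set: tree3]}) : injective f.
Proof.
move=> x y hxy.
have hx : (f^-1)%FUN (f x) = x by exact: (funK (s := f) (in_setT x)).
have hy : (f^-1)%FUN (f y) = y by exact: (funK (s := f) (in_setT y)).
by rewrite -hx -hy hxy.
Qed.

Lemma cantor_E : is_cantor_set (achievement_set xs).
Proof.
rewrite /is_cantor_set range_hE range_hC.
exact: (range_homeo hE_cont hC_cont hE_inj hC_inj).
Qed.

Lemma cantor_EE : is_cantor_set (set_add (achievement_set xs) (achievement_set xs)).
Proof.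
rewrite /is_cantor_set range_add range_hC.
have [f [fc _]] := tree3_hom.
rewrite (range_kEf f).
apply: range_homeo hC_cont _ hC_inj.
- by move=> x; apply: continuous_comp; [exact: fc | exact: kE_cont].
- by move=> x y /kE_inj /f_inj.
Qed.
Local Open Scope ereal_scope.

Lemma diam_le (R : realType) (S : set R) (t : R) : (0 <= t)%R ->
  (forall a b, S a -> S b -> (`|a - b| <= t)%R) -> diam S <= t%:E.
Proof.
move=> t0 hS; rewrite /diam ge_max lee_fin t0 /=.
apply: ge_ereal_sup => _ [a Sa [b Sb <-]]; rewrite lee_fin; exact: hS.
Qed.

Lemma diam_ge0 (R : realType) (S : set R) : 0 <= diam S.
Proof. by rewrite /diam le_max lexx. Qed.

Lemma fine_diam_le (R : realType) (S : set R) (t : R) : (0 <= t)%R ->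
  (forall a b, S a -> S b -> (`|a - b| <= t)%R) -> (0 <= fine (diam S) <= t)%R.
Proof.
move=> t0 hS; have h0 := diam_ge0 S; have h1 := diam_le t0 hS.
move: h0 h1; case: (diam S) => [x| |] //=; by rewrite !lee_fin => -> ->.
Qed.

Lemma sum_cover_bound (R : realType) (s : R) (B : nat) (t : R) (g : nat -> R) :
  (0 < s)%R -> (0 <= t)%R ->
  (forall i, 0 <= g i <= (if (i < B)%N then t else 0))%R ->
  \sum_(0 <= i <oo) ((g i) `^ s)%:E <= ((B%:R * t `^ s)%R)%:E.
Proof.
move=> s0 t0 hg.
pose v := fun i => (((if (i < B)%N then t else 0) `^ s)%:E : \bar R).
apply: (@le_trans _ _ (\sum_(0 <= i <oo) v i)).
  apply: lee_nneseries => [i _ _|i _]; first by rewrite lee_fin powR_ge0.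
  rewrite lee_fin; have /andP[h1 h2] := hg i.
  apply: ge0_ler_powR => //; first exact: ltW.
  by rewrite nnegrE; case: ifP.
rewrite (@nneseries_split _ _ 0 B); last by move=> k _; rewrite lee_fin powR_ge0.
rewrite add0n eseries0 ?adde0; last first.
  by move=> i Bi _; rewrite /v ltnNge Bi /= powR0 // gt_eqF.
rewrite (@eq_big_nat _ _ _ 0 B _ (fun _ => (t `^ s)%:E)); last first.
  by move=> i /andP[_ iB]; rewrite /v iB.
rewrite sumEFin sumr_const_nat subn0 lee_fin mulr_natl.
by [].
Qed.
Local Close Scope ereal_scope.

Definition Tn (n : nat) : RR := 1%:R * xs n / (1 - 4^-1).

Lemma cover_E n : exists U : nat -> set RR,
  range hE `<=` \bigcup_i U i /\
  forall i a b, U i a -> U i b -> `|a - b| <= (if (i < 2 ^ n)%N then Tn n else 0).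
Proof.
pose T := {ffun 'I_n -> bool}.
pose f0 : T := [ffun _ => false].
pose P i (d : cantor_space) := (i < 2 ^ n)%N /\
  forall k (hk : (k < n)%N), d k = nth f0 (enum T) i (Ordinal hk).
exists (fun i => hE @` (P i)); split.
  move=> _ [d _ <-].
  pose p : T := [ffun k : 'I_n => d k].
  exists (index p (enum T)) => //; exists d => //; split.
    have : (index p (enum T) < size (enum T))%N by rewrite index_mem mem_enum.
    by rewrite -cardE card_ffun card_bool card_ord.
  by move=> k hk; rewrite nth_index ?mem_enum // ffunE.
move=> i _ _ [d [iB hd] <-] [d' [_ hd'] <-]; rewrite iB.
apply: (@code_diff RR xs (4^-1) 1 xs_gt0 xs_rat q4.1 q4.2) => //.
- by move=> k; exact: bool_dig.
- by move=> k; exact: bool_dig.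
- by move=> k hk; rewrite (hd k hk) (hd' k hk).
Qed.

Lemma Tn_le n : Tn n <= (4^-1) ^+ (n * n).
Proof.
rewrite /Tn /xs exprSr mul1r.
have X0 : (0 : RR) <= (4^-1) ^+ (n * n) by rewrite exprn_ge0 // invr_ge0.
set X := (4^-1) ^+ (n * n).
have -> : (1 - 4^-1 : RR) = 3 / 4 by field.
rewrite invf_div.
have -> : X / 4 * (4 / 3) = X / 3 by field.
rewrite ler_pdivrMr //; move: X0; rewrite -/X; lra.
Qed.

Lemma geom_near (q : RR) (e : RR) : 0 <= q < 1 -> 0 < e ->
  \forall n \near \oo, q ^+ n < e.
Proof.
move=> /andP[q0 q1] e0.
have qa : `|q| < 1 by rewrite ger0_norm.
have := cvg_expr qa => /(cvgr0Pnorm_lt _) /(_ _ e0).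
by apply: filterS => n /=; rewrite ger0_norm // exprn_ge0.
Qed.

Lemma choose_n (s e d : RR) : 0 < s -> 0 < e -> 0 < d ->
  exists n, Tn n <= d /\ (2 ^ n)%:R * Tn n `^ s <= e.
Proof.
move=> s0 e0 d0.
pose q := (4^-1 : RR) `^ s.
have q0 : 0 <= q by exact: powR_ge0.
have q1 : q < 1.
  apply: (@lt_le_trans _ _ ((1 : RR) `^ s)); last by rewrite powR1.
  apply: gt0_ltr_powR => //; rewrite ?nnegrE ?invr_ge0 //.
  by rewrite invf_lt1 //; lra.
have h1 := @geom_near q (4^-1) ltac:(by rewrite q0 q1) ltac:(by rewrite invr_gt0).
have h2 := @geom_near (2^-1) e ltac:(rewrite invr_ge0 invf_lt1 //=; lra) e0.
have h3 := @geom_near (4^-1) d ltac:(rewrite invr_ge0 invf_lt1 //=; lra) d0.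
have [n [hn1 [hn2 hn3]]] := filter_ex (filterI h1 (filterI h2 h3)).
exists n; split.
  apply: (le_trans (Tn_le n)); apply: ltW; apply: le_lt_trans hn3.
  apply: ler_wiXn2l; rewrite ?invr_ge0 ?invf_le1 //; first lra.
  by nia.
have T0 : 0 <= Tn n by rewrite /Tn; apply: divr_ge0; [rewrite mul1r; exact: ltW (xs_gt0 n)|lra].
have hT : Tn n `^ s <= q ^+ (n * n).
  apply: (le_trans (ge0_ler_powR (ltW s0) _ _ (Tn_le n))); rewrite ?nnegrE //.
  rewrite -powR_mulrn ?invr_ge0 // -powRrM mulrC powRrM /q powR_mulrn //.
have hq : q ^+ (n * n) <= (4^-1) ^+ n.
  rewrite exprM; apply: lerXn2r; rewrite ?nnegrE ?exprn_ge0 ?invr_ge0 //.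
  exact: ltW.
apply: (le_trans (ler_wpM2l _ (le_trans hT hq))) => //.
rewrite natrX -exprMn; apply: ltW; apply: le_lt_trans hn2.
have -> : (2%:R / 4 : RR) = 2^-1 by field.
by [].
Qed.

Local Open Scope ereal_scope.

Lemma content0 (s d : RR) : (0 < s)%R -> (0 < d)%R -> hausdorff_content s d (range hE) = 0.
Proof.
move=> s0 d0; apply/eqP; rewrite eq_le; apply/andP; split.
  apply/lee_addgt0Pr => e e0; rewrite add0e.
  have [n [Tnd Tne]] := choose_n s0 e0 d0.
  have [U [cov hU]] := cover_E n.
  have T0 : (0 <= Tn n)%R.
    by rewrite /Tn; apply: divr_ge0; [rewrite mul1r; exact: ltW (xs_gt0 n)|lra].
  have t0 : forall i, (0 <= (if (i < 2 ^ n)%N then Tn n else 0))%R.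
    by move=> i; case: ifP.
  apply: (@le_trans _ _ (\sum_(0 <= i <oo) ((fine (diam (U i))) `^ s)%:E)).
    apply: ereal_inf_lbound; exists U => //; split => // i.
    apply: (le_trans (diam_le (t0 i) (hU i))).
    by rewrite lee_fin; case: ifP => _ //; exact: ltW.
  apply: (le_trans (@sum_cover_bound _ s (2 ^ n) (Tn n) _ s0 T0 _)).
    move=> i; exact: (fine_diam_le (t0 i) (hU i)).
  by rewrite lee_fin.
apply: le_ereal_inf_tmp => _ [U _ <-].
by apply: nneseries_ge0 => i _ _; rewrite lee_fin powR_ge0.
Qed.

Lemma hm0 (s : RR) : (0 < s)%R -> hausdorff_measure s (range hE) = 0.
Proof.
move=> s0; apply/eqP; rewrite eq_le; apply/andP; split.
  by apply: ge_ereal_sup => _ [d d0 <-]; rewrite content0.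
apply: ereal_sup_ubound; exists 1%R; first by rewrite /= ltr01.
exact: content0.
Qed.

Lemma dim0 : hausdorff_dim (range hE) = 0.
Proof.
apply/eqP; rewrite eq_le; apply/andP; split.
  apply/lee_addgt0Pr => e e0; rewrite add0e.
  apply: ereal_inf_lbound; exists e => //; split; [exact: ltW | exact: hm0].
apply: le_ereal_inf_tmp => _ [s [s0 _] <-].
by rewrite lee_fin.
Qed.

Local Close Scope ereal_scope.

Theorem mainTheorem2 :
  exists x : nat -> Rdefinitions.R,
    [/\ (forall n, 0 < x n),
        cvg (series x @ \oo),
        is_cantor_set (achievement_set x),
        hausdorff_dim (achievement_set x) = 0%E
      & is_cantor_set (set_add (achievement_set x) (achievement_set x))].
Proof.
exists xs; split.
- exact: xs_gt0.
- have -> : xs = (fun n => 1 * xs n) by apply: funext => n; rewrite mul1r.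
  apply: (@cvg_code RR xs (4^-1) 1 xs_gt0 xs_rat q4.1 q4.2) => k.
  by rewrite ler01 lexx.
- exact: cantor_E.
- rewrite range_hE; exact: dim0.
- exact: cantor_EE.
Qed.
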